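(* For $1\le\ell\le n$ let $s_{n,\ell}$ be the number of permutations $\sigma$ of $\{1,\dots,n\}$ avoiding both $1324$ and $2134$ with $\sigma(n)=\ell$. Then $h(x,u)=\sum_{n=1}^\infty\sum_{\ell=1}^n s_{n,\ell}u^\ell x^n$ is given by \[ h(x,u)=\frac{2ux(1-u)(1-ux)+ux\big(1-u(1-u)x\big)\big(1-x-\sqrt{1-6x+x^2}\big)}{2\big(1-u(1+x)+2u^2x\big)}. \] In particular, \[ h(x,1)=\frac{1-x-\sqrt{1-6x+x^2}}{2}, \] so the number of permutations of $\{1,\dots,n\}$ avoiding $1324$ and $2134$ is the $n$-th large Schröder number.
   Context: A permutation avoids a pattern $p$ if no subsequence of its one-line notation is order-isomorphic to $p$. The large Schröder numbers $1,2,6,22,90,\dots$ (for $n=1,2,\dots$) have generating function $\frac{1-x-\sqrt{1-6x+x^2}}{2}$ without constant term. *)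

(* Defs.v *)
From mathcomp Require Import all_boot all_order all_algebra all_fingroup.
Set Implicit Arguments. Unset Strict Implicit. Unset Printing Implicit Defensive.
Import GRing.Theory.
Local Open Scope ring_scope.

(* Permutations of {1..n} are modelled (0-based) as {perm 'I_n}; the one-line
   notation of s is s 0, s 1, ..., s (n-1).  A pattern of length k is given by
   its values p : 'I_k -> nat (1-based, as written). s contains p iff there are
   positions f 0 < ... < f (k-1) whose values are order-isomorphic to p. *)
Definition contains (n k : nat) (s : {perm 'I_n}) (p : 'I_k -> nat) : bool :=
  [exists f : {ffun 'I_k -> 'I_n},
    [forall a : 'I_k, forall b : 'I_k,
      ((a < b)%N ==> (f a < f b)%N) && (((s (f a) < s (f b))%N) == (p a < p b)%N)]].

Definition avoids (n k : nat) (s : {perm 'I_n}) (p : 'I_k -> nat) : bool :=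
  ~~ contains s p.

Definition pat1324 : 'I_4 -> nat := fun i => nth 0%N [:: 1; 3; 2; 4]%N i.
Definition pat2134 : 'I_4 -> nat := fun i => nth 0%N [:: 2; 1; 3; 4]%N i.

Definition avoiders (n : nat) : {set {perm 'I_n}} :=
  [set s : {perm 'I_n} | avoids s pat1324 && avoids s pat2134].

(* s_{n,l}: those with sigma(n) = l (1-based), i.e. s (n-1) = l-1 (0-based) *)
Definition snl (n l : nat) : nat :=
  #|[set s in avoiders n |
      [exists i : 'I_n, (val i == n.-1) && (val (s i) == l.-1)]]|.

(* A series is its coefficient sequence; the variable u is 'X of {poly rat}. *)
Definition fps := nat -> {poly rat}.

Definition fadd (f g : fps) : fps := fun n => f n + g n.
Definition fsub (f g : fps) : fps := fun n => f n - g n.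
Definition fmul (f g : fps) : fps :=
  fun n => \sum_(i < n.+1) f i * g (n - i)%N.
Definition fconst (c : {poly rat}) : fps := fun n => if n == 0%N then c else 0.
Definition fX : fps := fun n => if n == 1%N then 1 else 0.
Definition fU : fps := fconst 'X.
Definition fone : fps := fconst 1.
Definition ftwo : fps := fconst 2%:R.
Definition feq (f g : fps) : Prop := forall n, f n = g n.

Definition fat1 (f : fps) : fps := fun n => ((f n).[1])%:P.

Declare Scope fps_scope.
Delimit Scope fps_scope with fps.
Infix "+" := fadd : fps_scope.
Infix "-" := fsub : fps_scope.
Infix "*" := fmul : fps_scope.
Infix "==" := feq (at level 70) : fps_scope.

(* Q is "sqrt(1 - 6x + x^2)": the formal power series with constant term 1
   whose square is 1 - 6x + x^2. *)
Definition is_sqrt_schroder (Q : fps) : Prop :=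
  Q 0%N = 1 /\ (Q * Q == fone - fconst 6%:R * fX + fX * fX)%fps.

Definition hser : fps :=
  fun n => \sum_(1 <= l < n.+1) (snl n l)%:R *: 'X^l.

(* Main.v *)
From HB Require Import structures.
Require Import Defs.
From mathcomp Require Import all_boot all_order all_algebra all_fingroup.
From mathcomp Require Import zify ring.
Set Implicit Arguments. Unset Strict Implicit. Unset Printing Implicit Defensive.

Section Pat.
Definition pat3 (w : nat -> nat) (b i j k : nat) : bool :=
  ((w i < w k) && (w k < w j) && (w j < b)) || ((w j < w i) && (w i < w k) && (w k < b)).
Definition T2 (w : nat -> nat) (b k : nat) : bool :=
  has (fun j => has (fun i => pat3 w b i j k) (iota 0 j)) (iota 0 k).
Definition P3 (n : nat) (w : nat -> nat) (b : nat) : bool := has (T2 w b) (iota 0 n).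
Definition P4 (n : nat) (w : nat -> nat) : bool := has (fun l => P3 l w (w l)) (iota 0 n).
Definition Inv (n : nat) (w : nat -> nat) (b : nat) : bool :=
  has (fun j => has (fun i => (w j < w i) && (w i < b)) (iota 0 j)) (iota 0 n).

Lemma T2P w b k : reflect (exists i j, [/\ i < j, j < k & pat3 w b i j k]) (T2 w b k).
Proof.
apply: (iffP hasP) => [[j]|[i [j [ij jk p]]]].
  rewrite mem_iota => /andP[_ jk] /hasP[i]; rewrite mem_iota => /andP[_ ij] p.
  by exists i, j.
by exists j; rewrite ?mem_iota //; apply/hasP; exists i; rewrite ?mem_iota.
Qed.

Lemma P3P n w b : reflect (exists i j k, [/\ i < j, j < k, k < n & pat3 w b i j k]) (P3 n w b).
Proof.
apply: (iffP hasP) => [[k]|[i [j [k [ij jk kn p]]]]].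
  by rewrite mem_iota => /andP[_ kn] /T2P[i [j [ij jk p]]]; exists i, j, k.
by exists k; rewrite ?mem_iota //; apply/T2P; exists i, j.
Qed.

Lemma P4P n w : reflect (exists i j k l, [/\ i < j, j < k, k < l, l < n & pat3 w (w l) i j k]) (P4 n w).
Proof.
apply: (iffP hasP) => [[l]|[i [j [k [l [ij jk kl ln p]]]]]].
  by rewrite mem_iota => /andP[_ ln] /P3P[i [j [k [ij jk kl p]]]]; exists i, j, k, l.
by exists l; rewrite ?mem_iota //; apply/P3P; exists i, j, k.
Qed.

Lemma InvP n w b : reflect (exists i j, [/\ i < j, j < n, w j < w i & w i < b]) (Inv n w b).
Proof.
apply: (iffP hasP) => [[j]|[i [j [ij jn h1 h2]]]].
  rewrite mem_iota => /andP[_ jn] /hasP[i]; rewrite mem_iota => /andP[_ ij] /andP[h1 h2].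
  by exists i, j.
by exists j; rewrite ?mem_iota //; apply/hasP; exists i; rewrite ?mem_iota ?h1.
Qed.

Lemma P3S n w b : P3 n.+1 w b = P3 n w b || T2 w b n.
Proof. by rewrite /P3 -addn1 iotaD has_cat /= orbF. Qed.

Lemma P4S n w : P4 n.+1 w = P4 n w || P3 n w (w n).
Proof. by rewrite /P4 -addn1 iotaD has_cat /= orbF. Qed.

Lemma P3_ext n w w' b : (forall i, i < n -> w i = w' i) -> P3 n w b = P3 n w' b.
Proof.
move=> E; apply/P3P/P3P => -[i [j [k [ij jk kn p]]]]; exists i, j, k; split=> //;
  move: p; rewrite /pat3 !E //; lia.
Qed.

Lemma P4_ext n w w' : (forall i, i < n -> w i = w' i) -> P4 n w = P4 n w'.
Proof.
move=> E; apply/P4P/P4P => -[i [j [k [l [ij jk kl ln p]]]]]; exists i, j, k, l; split=> //;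
  move: p; rewrite /pat3 !E //; lia.
Qed.

Lemma pat3_mono f w b b' i j k : (forall a c, (f a < f c) = (a < c)) ->
  (forall a, (f a < b) = (a < b')) -> pat3 (f \o w) b i j k = pat3 w b' i j k.
Proof. by move=> Hf Hb; rewrite /pat3 /= !Hf !Hb. Qed.

Lemma P3_mono f n w b b' : (forall a c, (f a < f c) = (a < c)) ->
  (forall a, (f a < b) = (a < b')) -> P3 n (f \o w) b = P3 n w b'.
Proof.
move=> Hf Hb; apply/P3P/P3P => -[i [j [k [ij jk kn p]]]]; exists i, j, k; split=> //;
  by move: p; rewrite (@pat3_mono f w b b' i j k Hf Hb).
Qed.

Lemma P4_mono f n w : (forall a c, (f a < f c) = (a < c)) -> P4 n (f \o w) = P4 n w.
Proof.
move=> Hf; apply/P4P/P4P => -[i [j [k [l [ij jk kl ln p]]]]]; exists i, j, k, l; split=> //;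
  by move: p; rewrite (@pat3_mono f w (f (w l)) (w l) i j k Hf (fun a => Hf a (w l))).
Qed.

Lemma P3_anti n w a b : a <= b -> P3 n w a -> P3 n w b.
Proof.
move=> ab /P3P[i [j [k [ij jk kn p]]]]; apply/P3P; exists i, j, k; split=> //.
by move: p; rewrite /pat3; lia.
Qed.

Lemma P3_0 n w : P3 n w 0 = false.
Proof. by apply/P3P => -[i [j [k [_ _ _]]]]; rewrite /pat3; lia. Qed.

Lemma Inv_anti n w a b : a <= b -> Inv n w a -> Inv n w b.
Proof.
move=> ab /InvP[i [j [ij jn h1 h2]]]; apply/InvP; exists i, j; split=> //; lia.
Qed.

Lemma Inv_1 n w b : b <= 1 -> Inv n w b = false.
Proof. by move=> b1; apply/InvP => -[i [j [_ _ h1 h2]]]; lia. Qed.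

Lemma P3_Inv n w b : P3 n w b -> Inv n w b.
Proof.
move=> /P3P[i [j [k [ij jk kn]]]]; rewrite /pat3 => /orP[|] p; apply/InvP.
  by exists j, k; split=> //; lia.
by exists i, j; split=> //; lia.
Qed.
End Pat.

Section Perms.
Definition ws (n : nat) (s : {perm 'I_n}) : nat -> nat :=
  fun i => if insub i is Some o then val (s o) else 0.

Lemma ws_val n (s : {perm 'I_n}) (o : 'I_n) : ws s o = s o.
Proof. by rewrite /ws valK. Qed.

Lemma ws_lt n (s : {perm 'I_n}) i : i < n -> ws s i < n.
Proof. by move=> lin; rewrite -[i]/(val (Ordinal lin)) ws_val. Qed.

Lemma ws_inj n (s : {perm 'I_n}) i j : i < n -> j < n -> ws s i = ws s j -> i = j.
Proof.
move=> lin ljn; rewrite -[i]/(val (Ordinal lin)) -[j]/(val (Ordinal ljn)) !ws_val.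
by move/val_inj/perm_inj => ->.
Qed.

Lemma ws_surj n (s : {perm 'I_n}) v : v < n -> exists i, i < n /\ ws s i = v.
Proof.
move=> vn; exists (nat_of_ord ((s^-1)%g (Ordinal vn))); split=> //.
by rewrite ws_val permKV.
Qed.

Lemma eqb_ltn x y (c : bool) : (c -> x < y) -> (~~ c -> y <= x) -> (x < y) == c.
Proof. by case: c => [-> // | _ /(_ isT)]; rewrite ltnNge => ->. Qed.

Lemma contains1324 n (s : {perm 'I_n}) :
  contains s pat1324 <-> exists i j k l, [/\ i < j, j < k, k < l, l < n &
     [&& ws s i < ws s k, ws s k < ws s j & ws s j < ws s l]].
Proof.
split.
  case/existsP => f /forallP H.
  have H2 a b := forallP (H a) b.
  exists (f ord0), (f (inord 1)), (f (inord 2)), (f (inord 3)); rewrite !ws_val.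
  have v02 : s (f ord0) < s (f (inord 2)).
    by have /andP[_ /eqP ->] := H2 ord0 (inord 2); rewrite /pat1324 /= inordK.
  have v21 : s (f (inord 2)) < s (f (inord 1)).
    by have /andP[_ /eqP ->] := H2 (inord 2) (inord 1); rewrite /pat1324 /= !inordK.
  have v13 : s (f (inord 1)) < s (f (inord 3)).
    by have /andP[_ /eqP ->] := H2 (inord 1) (inord 3); rewrite /pat1324 /= !inordK.
  have p01 : f ord0 < f (inord 1).
    by have /andP[/implyP H' _] := H2 ord0 (inord 1); apply: H'; rewrite /= inordK.
  have p12 : f (inord 1) < f (inord 2).
    by have /andP[/implyP H' _] := H2 (inord 1) (inord 2); apply: H'; rewrite /= !inordK.
  have p23 : f (inord 2) < f (inord 3).
    by have /andP[/implyP H' _] := H2 (inord 2) (inord 3); apply: H'; rewrite /= !inordK.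
  by split=> //; rewrite v02 v21 v13.
case=> i [j [k [l [ij jk kl ln /and3P[h1 h2 h3]]]]].
have io : i < n by lia. have jo : j < n by lia. have ko : k < n by lia.
pose g := [:: Ordinal io; Ordinal jo; Ordinal ko; Ordinal ln].
apply/existsP; exists [ffun a : 'I_4 => nth (Ordinal ln) g a].
move: h1 h2 h3; rewrite -[i]/(val (Ordinal io)) -[j]/(val (Ordinal jo)) -[k]/(val (Ordinal ko)).
rewrite -[l]/(val (Ordinal ln)) !ws_val => h1 h2 h3.
apply/forallP => -[[|[|[|[|a]]]] Ha] //; apply/forallP => -[[|[|[|[|b]]]] Hb] //;
  rewrite !ffunE; apply/andP; split.
all: try (apply/implyP => /= H; try done; lia).
all: (apply: eqb_ltn => /= H; try done; lia).
Qed.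
Lemma contains2134 n (s : {perm 'I_n}) :
  contains s pat2134 <-> exists i j k l, [/\ i < j, j < k, k < l, l < n &
     [&& ws s j < ws s i, ws s i < ws s k & ws s k < ws s l]].
Proof.
split.
  case/existsP => f /forallP H.
  have H2 a b := forallP (H a) b.
  exists (f ord0), (f (inord 1)), (f (inord 2)), (f (inord 3)); rewrite !ws_val.
  have v02 : s (f (inord 1)) < s (f ord0).
    by have /andP[_ /eqP ->] := H2 (inord 1) ord0; rewrite /pat2134 /= inordK.
  have v21 : s (f ord0) < s (f (inord 2)).
    by have /andP[_ /eqP ->] := H2 ord0 (inord 2); rewrite /pat2134 /= !inordK.
  have v13 : s (f (inord 2)) < s (f (inord 3)).
    by have /andP[_ /eqP ->] := H2 (inord 2) (inord 3); rewrite /pat2134 /= !inordK.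
  have p01 : f ord0 < f (inord 1).
    by have /andP[/implyP H' _] := H2 ord0 (inord 1); apply: H'; rewrite /= inordK.
  have p12 : f (inord 1) < f (inord 2).
    by have /andP[/implyP H' _] := H2 (inord 1) (inord 2); apply: H'; rewrite /= !inordK.
  have p23 : f (inord 2) < f (inord 3).
    by have /andP[/implyP H' _] := H2 (inord 2) (inord 3); apply: H'; rewrite /= !inordK.
  by split=> //; rewrite v02 v21 v13.
case=> i [j [k [l [ij jk kl ln /and3P[h1 h2 h3]]]]].
have io : i < n by lia. have jo : j < n by lia. have ko : k < n by lia.
pose g := [:: Ordinal io; Ordinal jo; Ordinal ko; Ordinal ln].
apply/existsP; exists [ffun a : 'I_4 => nth (Ordinal ln) g a].
move: h1 h2 h3; rewrite -[i]/(val (Ordinal io)) -[j]/(val (Ordinal jo)) -[k]/(val (Ordinal ko)).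
rewrite -[l]/(val (Ordinal ln)) !ws_val => h1 h2 h3.
apply/forallP => -[[|[|[|[|a]]]] Ha] //; apply/forallP => -[[|[|[|[|b]]]] Hb] //;
  rewrite !ffunE; apply/andP; split.
all: try (apply/implyP => /= H; try done; lia).
all: (apply: eqb_ltn => /= H; try done; lia).
Qed.
End Perms.

Section Lift.

Lemma av_P4 n (s : {perm 'I_n}) : (s \in avoiders n) = ~~ P4 n (ws s).
Proof.
rewrite inE /avoids -negb_or; congr negb.
apply/idP/P4P.
  case/orP => [/contains1324|/contains2134] [i [j [k [l [? ? ? ? p]]]]];
    exists i, j, k, l; split=> //; rewrite /pat3; move: p => /and3P[-> -> ->] //.
  by rewrite orbT.
case=> i [j [k [l [? ? ? ? /orP[/andP[/andP[p1 p2] p3]|/andP[/andP[p1 p2] p3]]]]]].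
  by apply/orP; left; apply/contains1324; exists i, j, k, l; split=> //; rewrite p1 p2 p3.
by apply/orP; right; apply/contains2134; exists i, j, k, l; split=> //; rewrite p1 p2 p3.
Qed.

Lemma ltn_bump2 j a c : (bump j a < bump j c) = (a < c).
Proof. rewrite /bump; case: (leqP j a); case: (leqP j c) => /= *; lia. Qed.

Lemma ltn_bump_l j a : (bump j a < j) = (a < j).
Proof. rewrite /bump; case: (leqP j a) => /= *; lia. Qed.

Variable n : nat.
Variable tau : {perm 'I_n}.
Variable j : 'I_n.+1.
Let sig := lift_perm ord_max j tau.

Lemma ws_lift_lt i : i < n -> ws sig i = bump j (ws tau i).
Proof.
move=> lin.
have -> : i = lift ord_max (Ordinal lin) by rewrite lift_max.
by rewrite ws_val /sig lift_perm_lift [in RHS]lift_max ws_val.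
Qed.

Lemma ws_lift_n : ws sig n = j.
Proof.
have := ws_val sig ord_max; rewrite [nat_of_ord _]/= => ->.
by rewrite /sig lift_perm_id.
Qed.

Lemma av_lift : (sig \in avoiders n.+1) = (tau \in avoiders n) && ~~ P3 n (ws tau) j.
Proof.
rewrite !av_P4 P4S negb_or ws_lift_n.
rewrite (P4_ext (w' := bump j \o ws tau)); last exact: ws_lift_lt.
rewrite (P3_ext (w' := bump j \o ws tau)); last exact: ws_lift_lt.
rewrite P4_mono; last exact: ltn_bump2.
by rewrite (@P3_mono (bump j) n (ws tau) j j) //; [exact: ltn_bump2 | exact: ltn_bump_l].
Qed.

End Lift.

Section Max.
Lemma max_spec N (P : pred nat) : P 0 -> (forall a b, a <= b -> P b -> P a) ->
  (\max_(b < N.+1 | P b) b <= N) /\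
  (forall b, b <= N -> P b = (b <= \max_(b < N.+1 | P b) b)).
Proof.
move=> P0 anti; set M := \max_(b < N.+1 | P b) b.
have MN : M <= N by apply/bigmax_leqP => i _; rewrite -ltnS.
have PM : P M.
  have cA : 0 < #|(fun b : 'I_N.+1 => P b)| by apply/card_gt0P; exists ord0; exact: P0.
  have [i0 Pi0 E] := @eq_bigmax_cond _ (fun b : 'I_N.+1 => P b) (fun b => nat_of_ord b) cA.
  have -> : M = i0 by exact: E.
  exact: Pi0.
split=> // b bN; apply/idP/idP => [Pb | bM].
  by apply: (@leq_bigmax_cond _ (fun b : 'I_N.+1 => P b) (fun b => nat_of_ord b) (Ordinal (bN : b < N.+1))).
exact: anti bM PM.
Qed.
End Max.

Section Kf.
Definition good n (t : {perm 'I_n}) b := ~~ P3 n (ws t) b.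
Definition Kf n (t : {perm 'I_n}) := \max_(b < n.+1 | good t b) b.
Definition noinv n (t : {perm 'I_n}) b := ~~ Inv n (ws t) b.
Definition beta n (t : {perm 'I_n}) := \max_(b < n.+1 | noinv t b) b.

Lemma Kf_spec n (t : {perm 'I_n}) : Kf t <= n /\ forall b, b <= n -> good t b = (b <= Kf t).
Proof.
apply: max_spec; first by rewrite /good P3_0.
by move=> a b ab; apply: contra; apply: P3_anti.
Qed.

Lemma beta_spec n (t : {perm 'I_n}) : beta t <= n /\ forall b, b <= n -> noinv t b = (b <= beta t).
Proof.
apply: max_spec; first by rewrite /noinv Inv_1.
by move=> a b ab; apply: contra; apply: Inv_anti.
Qed.

Lemma Kf_eq n (t : {perm 'I_n}) c : c <= n -> good t c -> (c < n -> ~~ good t c.+1) -> Kf t = c.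
Proof.
have [Kn KS] := Kf_spec t.
move=> cn gc H; rewrite KS // in gc.
case: (ltnP c n) => [cln|]; last by lia.
by have := H cln; rewrite KS // -ltnNge => ?; lia.
Qed.

Lemma beta_le_Kf n (t : {perm 'I_n}) : beta t <= Kf t.
Proof.
have [bn bS] := beta_spec t; have [Kn KS] := Kf_spec t.
rewrite -KS //; have := bS _ bn; rewrite leqnn /noinv /good.
by apply: contra; apply: P3_Inv.
Qed.

Lemma beta_ge1 n (t : {perm 'I_n}) : 0 < n -> 0 < beta t.
Proof.
have [bn bS] := beta_spec t.
by move=> n0; rewrite -(bS 1 n0) /noinv Inv_1.
Qed.
End Kf.

Section GoodLift.
Definition C1 (n : nat) (w : nat -> nat) (l b : nat) : bool :=
  has (fun j => has (fun i => (w i < l) && (l <= w j) && (w j + 2 <= b)) (iota 0 j)) (iota 0 n).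

Lemma C1P n w l b : reflect (exists i j, [/\ i < j, j < n, w i < l, l <= w j & w j + 2 <= b]) (C1 n w l b).
Proof.
apply: (iffP hasP) => [[j]|[i [j [ij jn h1 h2 h3]]]].
  rewrite mem_iota => /andP[_ jn] /hasP[i]; rewrite mem_iota => /andP[_ ij] /andP[/andP[h1 h2] h3].
  by exists i, j.
by exists j; rewrite ?mem_iota //; apply/hasP; exists i; rewrite ?mem_iota ?h1 ?h2.
Qed.

Variable n : nat.
Variable tau : {perm 'I_n}.
Variable l : 'I_n.+1.
Let sig := lift_perm ord_max l tau.

Lemma bump_lt_b a b : (bump l a < b) = (a < (if b <= l then b else b.-1)).
Proof. rewrite /bump; case: (leqP l a); case: (leqP b l) => /= *; lia. Qed.

Lemma good_lift b : good sig b =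
  [&& good tau (if b <= l then b else b.-1), ~~ C1 n (ws tau) l b & ~~ (Inv n (ws tau) l && (l < b))].
Proof.
rewrite /good P3S negb_or.
rewrite (P3_ext (w' := bump l \o ws tau)); last exact: ws_lift_lt.
rewrite (@P3_mono (bump l) n (ws tau) b (if b <= l then b else b.-1));
  [| first [exact: ltn_bump2 | move=> a; exact: bump_lt_b] | first [exact: ltn_bump2 | move=> a; exact: bump_lt_b]].
congr (_ && _); rewrite -negb_or; congr negb.
apply/T2P/orP => [[i [j [ij jn]]]|].
  rewrite /pat3 ws_lift_n !ws_lift_lt //; try lia.
  rewrite /bump; case: (leqP l (ws tau i)) => hi; case: (leqP l (ws tau j)) => hj /= p.
  - by exfalso; move: p; lia.
  - by exfalso; move: p; lia.
  - by left; apply/C1P; exists i, j; split=> //; lia.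
  - right; apply/andP; split; last by lia.
    by apply/InvP; exists i, j; split=> //; lia.
case=> [/C1P[i [j [ij jn h1 h2 h3]]]|/andP[/InvP[i [j [ij jn h1 h2]]] lb]];
  exists i, j; split=> //; rewrite /pat3 ws_lift_n !ws_lift_lt //; try lia;
  rewrite /bump; case: (leqP l (ws tau i)) => hi; case: (leqP l (ws tau j)) => hj /=; lia.
Qed.
End GoodLift.

Section KfLift.
Variable n : nat.
Variable tau : {perm 'I_n}.
Variable l : 'I_n.+1.
Hypothesis lK : l <= Kf tau.
Let sig := lift_perm ord_max l tau.

Lemma Kf_lift0 : nat_of_ord l = 0 -> Kf sig = (Kf tau).+1.
Proof.
move=> l0; have [Kn KS] := Kf_spec tau.
apply: Kf_eq; first by lia.
  rewrite good_lift l0 /= KS // leqnn /=; apply/andP; split.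
    by apply/C1P => -[i [j [_ _ h _ _]]]; lia.
  by rewrite Inv_1.
move=> Kn1; rewrite good_lift l0 /= KS ?ltnn //; lia.
Qed.

Lemma Kf_liftC : beta tau < l -> Kf sig = l.
Proof.
move=> bl; have [Kn KS] := Kf_spec tau; have [bn bS] := beta_spec tau.
apply: Kf_eq; first by lia.
  rewrite good_lift leqnn KS //; last by lia.
  apply/and3P; split; first exact: lK.
    by apply/C1P => -[i [j [_ _ _ h1 h2]]]; lia.
  by rewrite ltnn andbF.
move=> _; rewrite good_lift ltnn /= ltnSn andbT.
have -> : Inv n (ws tau) l by move: (bS l); rewrite /noinv; case: (Inv _ _ _) => //; lia.
by rewrite !andbF.
Qed.

Lemma Kf_liftA : 0 < nat_of_ord l -> l < beta tau -> Kf sig = l.+1.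
Proof.
move=> l0 lb; have [Kn KS] := Kf_spec tau; have [bn bS] := beta_spec tau.
apply: Kf_eq; first by lia.
  rewrite good_lift ltnn /= KS; last by lia.
  have -> : Inv n (ws tau) l = false.
    by move: (bS l); rewrite /noinv; case: (Inv _ _ _) => //= ->; lia.
  apply/and3P; split; first exact: lK.
    by apply/C1P => -[i [j [_ _ _ h1 h2]]]; lia.
  by [].
move=> _; rewrite good_lift /=.
have ln : nat_of_ord l < n by lia.
have n0 : 0 < n by lia.
have [q [qn wq]] := ws_surj tau ln.
have [p [pn wp]] := ws_surj tau n0.
suff -> : C1 n (ws tau) l l.+2 by rewrite andbF.
apply/C1P; case: (ltngtP p q) => [pq|qp|pq].
- by exists p, q; split=> //; lia.
- have : noinv tau l.+1 by rewrite bS //; lia.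
  by rewrite /noinv => /InvP; case; exists q, p; split=> //; lia.
- by move: wq; rewrite -pq wp; lia.
Qed.

Lemma Kf_liftB : 0 < nat_of_ord l -> nat_of_ord l = beta tau -> Kf sig = (Kf tau).+1.
Proof.
move=> l0 lb; have [Kn KS] := Kf_spec tau; have [bn bS] := beta_spec tau.
have ninv : ~~ Inv n (ws tau) l by rewrite -/(noinv tau l) bS //; lia.
have goodK b : b <= Kf tau -> ~~ P3 n (ws tau) b by move=> bK; rewrite -/(good tau b) KS //; lia.
apply: Kf_eq; first by lia.
  rewrite good_lift leqNgt ltnS lK /= KS // leqnn /= (negbTE ninv) /= andbT.
  apply/C1P => -[i [j [ij jn hi hj hb]]].
  have linv : Inv n (ws tau) l.+1.
    have : ~~ noinv tau l.+1 by rewrite bS; lia.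
    by rewrite /noinv negbK.
  case/InvP: linv => i' [j' [ij' j'n h1 h2]].
  have wi' : ws tau i' = l.
    case: (ltnP (ws tau i') l) => // h3; first by case/negP: ninv; apply/InvP; exists i', j'; split=> //; lia.
    lia.
  case: (ltngtP (ws tau j) l) => [|ljw|ljw]; first by lia.
  +
    case: (ltngtP i' i) => [qi|iq|iq].
    * case/negP: (goodK (ws tau j).+1 ltac:(lia)); apply/P3P; exists i', i, j; split=> //; try lia.
      by rewrite /pat3; apply/orP; right; lia.
    * case: (ltngtP (ws tau i) (ws tau j')) => [a|a|a].
      - case/negP: (goodK l.+1 ltac:(lia)); apply/P3P; exists i, i', j'; split=> //; try lia.
        by rewrite /pat3; apply/orP; left; lia.
      - by case/negP: ninv; apply/InvP; exists i, j'; split=> //; lia.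
      - by have := @ws_inj n tau i j'; lia.
    * by move: wi'; rewrite iq; lia.
  +
    have jj : j = i' by apply: (@ws_inj n tau); lia.
    case: (ltngtP (ws tau i) (ws tau j')) => [a|a|a].
    - case/negP: (goodK l.+1 ltac:(lia)); apply/P3P; exists i, j, j'; split=> //; try lia.
      by rewrite /pat3; apply/orP; left; lia.
    - by case/negP: ninv; apply/InvP; exists i, j'; split=> //; lia.
    - by have := @ws_inj n tau i j'; lia.
move=> Kn1; rewrite good_lift leqNgt ltnS (leq_trans lK) //= KS; lia.
Qed.
End KfLift.

Section Count.
Import GRing.Theory.
Local Open Scope ring_scope.

Lemma reindex_lift n (R : nmodType) (P : pred {perm 'I_n.+1}) (F : {perm 'I_n.+1} -> R) (j0 : 'I_n.+1) :
  \sum_(s | P s && (s ord_max == j0)) F s = \sum_(t : {perm 'I_n} | P (lift_perm ord_max j0 t)) F (lift_perm ord_max j0 t).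
Proof.
set i0 : 'I_n.+1 := ord_max.
rewrite (reindex (lift_perm i0 j0)); last first.
  pose ulsf i (s : 'S_n.+1) k := odflt k (unlift (s i) (s (lift i k))).
  have ulsfK i (s : 'S_n.+1) k: lift (s i) (ulsf i s k) = s (lift i k).
    rewrite /ulsf; have:= neq_lift i k.
    by rewrite -(can_eq (permK s)) => /unlift_some[] ? ? ->.
  have inj_ulsf: injective (ulsf i0 _).
    move=> s; apply: can_inj (ulsf (s i0) s^-1%g) _ => k'.
    by rewrite {1}/ulsf ulsfK !permK liftK.
  exists (fun s => perm (inj_ulsf s)) => [s _ | s].
    by apply/permP=> k'; rewrite permE /ulsf lift_perm_lift lift_perm_id liftK.
  move/andP => [_ /(s _ =P _) si0]; apply/permP=> k.
  case: (unliftP i0 k) => [k'|] ->; rewrite ?lift_perm_id //.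
  by rewrite lift_perm_lift -si0 permE ulsfK.
by apply: eq_bigl => t; rewrite lift_perm_id eqxx andbT.
Qed.

Lemma sum_lift n (R : nmodType) (F : {perm 'I_n.+1} -> R) :
  \sum_(s in avoiders n.+1) F s =
  \sum_(t in avoiders n) \sum_(l < n.+1 | (l <= Kf t)%N) F (lift_perm ord_max l t).
Proof.
rewrite (partition_big (fun s : {perm 'I_n.+1} => s ord_max) xpredT) //=.
have E j : \sum_(s | (s \in avoiders n.+1) && (s ord_max == j)) F s =
    \sum_(t | (t \in avoiders n) && (j <= Kf t)%N) F (lift_perm ord_max j t).
  rewrite (reindex_lift (fun s => s \in avoiders n.+1)).
  apply: eq_bigl => t; rewrite av_lift -/(good t j).
  by have [_ ->] := Kf_spec t; rewrite // -ltnS.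
under eq_bigr => j _ do rewrite E.
rewrite (exchange_big_dep (fun t : {perm 'I_n} => t \in avoiders n)) /=; last first.
  by move=> j t _ /andP[].
apply: eq_bigr => t tav; apply: eq_bigl => j.
by rewrite tav.
Qed.
End Count.

Section Poly.
Import GRing.Theory.
Local Open Scope ring_scope.

Definition Fp (n : nat) : {poly rat} := \sum_(t in avoiders n) 'X^(Kf t).

Lemma Fp1 n : (Fp n).[1] = (#|avoiders n|)%:R.
Proof.
rewrite /Fp horner_sum (eq_bigr (fun _ => 1)); last by move=> t _; rewrite hornerXn expr1n.
by rewrite sumr_const.
Qed.

Lemma av0 : avoiders 0 = [set: {perm 'I_0}].
Proof. by apply/setP => t; rewrite av_P4 inE. Qed.

Lemma card_av0 : #|avoiders 0| = 1%N.
Proof. by rewrite av0 cardsT card_Sn. Qed.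

Lemma Fp0 : Fp 0 = 1.
Proof.
rewrite /Fp (eq_bigr (fun _ => 1)); last first.
  by move=> t _; have [K0 _] := Kf_spec t; rewrite (_ : Kf t = 0%N) ?expr0 //; lia.
by rewrite sumr_const card_av0.
Qed.

Lemma tele (a b c : nat) : (a <= b)%N ->
  (1 - 'X) * \sum_(a <= l < b) 'X^(l + c) = 'X^(a + c) - 'X^(b + c) :> {poly rat}.
Proof.
elim: b => [|b IH]; first by rewrite leqn0 => /eqP ->; rewrite big_geq // mulr0 subrr.
rewrite leq_eqVlt => /orP[/eqP ->|]; first by rewrite big_geq // mulr0 subrr.
rewrite ltnS => ab; rewrite big_nat_recr //= mulrDr IH // addSn exprS.
ring.
Qed.
End Poly.

Section Tree.
Import GRing.Theory.
Local Open Scope ring_scope.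

Lemma tree_one n (t : {perm 'I_n}) :
  (1 - 'X) * \sum_(l < n.+1 | (l <= Kf t)%N) 'X^(Kf (lift_perm ord_max l t))
    = 'X * 'X + (1 - 2%:R * 'X) * 'X^((Kf t).+1) :> {poly rat}.
Proof.
have [Kn KS] := Kf_spec t.
case: n t Kn KS => [|n] t Kn KS.
  have K0 : Kf t = 0%N by lia.
  rewrite big_ord1_cond K0 /= Kf_lift0 ?K0 //; ring.
set K := Kf t; set b := beta t.
have [bn bS] := beta_spec t.
have b1 : (0 < b)%N by apply: beta_ge1.
have bK : (b <= K)%N by apply: beta_le_Kf.
pose f l := if l == 0%N then K.+1 else if (l < b)%N then l.+1 else if l == b then K.+1 else l.
have E : \sum_(l < n.+2 | (l <= K)%N) 'X^(Kf (lift_perm ord_max l t)) =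
         \sum_(0 <= l < K.+1) 'X^(f l) :> {poly rat}.
  rewrite (big_nat_widen _ _ _ _ _ (_ : K.+1 <= n.+2)%N); last by lia.
  rewrite big_mkord; apply: eq_big => l; first by rewrite ltnS.
  move=> lK; congr ('X^_); rewrite /f.
  case: eqP => [l0|/eqP l0]; first by rewrite Kf_lift0.
  case: ltnP => [lb|bl]; first by rewrite Kf_liftA //; lia.
  case: eqP => [lb|/eqP lb]; first by rewrite Kf_liftB //; lia.
  by rewrite Kf_liftC //; lia.
rewrite E big_nat_recl // (big_cat_nat (n := b.-1)) //=; last by lia.
rewrite (big_ltn (m := b.-1)); last by lia.
rewrite (_ : b.-1.+1 = b); last by lia.
have f0 : f 0%N = K.+1 by [].
have fb : f b = K.+1 by rewrite /f ltnn eqxx; case: eqP => //; lia.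
rewrite (eq_big_nat _ _ (F2 := fun l => 'X^(l + 2))); last first.
  by move=> l /andP[_ lb]; rewrite /f /=; case: ltnP => ?; [congr ('X^_); lia | lia].
rewrite (eq_big_nat _ _ (F1 := fun l => 'X^(f l.+1)) (F2 := fun l => 'X^(l + 1))); last first.
  move=> l /andP[bl _]; rewrite /f /=; case: ltnP => ?; first lia.
  by case: eqP => ?; [lia | congr ('X^_); lia].
rewrite f0 fb !mulrDr tele; last by lia.
rewrite tele; last by lia.
rewrite (_ : (b.-1 + 2 = b + 1)%N); last by lia.
rewrite !addn1 !addn2 !exprS expr0; ring.
Qed.
End Tree.

Section HL.
Import GRing.Theory.
Local Open Scope ring_scope.

Lemma L2 n : (1 - 'X) * Fp n.+1 = 'X * 'X * (#|avoiders n|)%:R + 'X * (1 - 2%:R * 'X) * Fp n.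
Proof.
rewrite /Fp sum_lift mulr_sumr.
rewrite (eq_bigr (fun t => 'X * 'X + (1 - 2%:R * 'X) * 'X^((Kf t).+1))); last first.
  by move=> t _; exact: tree_one.
rewrite big_split /= sumr_const [in RHS]mulr_sumr mulr_natr; congr (_ + _).
by apply: eq_bigr => t _; rewrite exprS; ring.
Qed.

Lemma snl_R n l : (l <= n)%N ->
  (snl n.+1 l.+1)%:R = \sum_(t in avoiders n) ((l <= Kf t)%N : nat)%:R :> {poly rat}.
Proof.
move=> ln.
have -> : snl n.+1 l.+1 = \sum_(s in avoiders n.+1) ((ws s n == l) : nat).
  rewrite /snl cardsE -sum1_card big_mkcondr /=; apply: eq_bigr => s _.
  have -> : [exists i : 'I_n.+1, (val i == n) && (val (s i) == l.+1.-1)] = (ws s n == l).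
    apply/existsP/eqP => [[i /andP[/eqP ei /eqP si]]|si].
      have E : i = ord_max by apply: val_inj.
      subst i; have := ws_val s ord_max; rewrite [nat_of_ord _]/= => ->; exact: si.
    exists ord_max; rewrite eqxx /=; have := ws_val s ord_max; rewrite [nat_of_ord _]/= => <-.
    by rewrite si.
  by case: (ws s n == l).
rewrite natr_sum sum_lift; apply: eq_bigr => t _.
under eq_bigr => j _ do rewrite ws_lift_n.
have lo : (l < n.+1)%N by lia.
case: (leqP l (Kf t)) => lK.
  rewrite (bigD1 (Ordinal lo)) //= eqxx big1 ?addr0 // => j /andP[_ jl].
  by case: eqP => // ejl; case/eqP: jl; apply: val_inj.
rewrite big1 // => j jK; case: eqP => // ejl; lia.
Qed.

Lemma scale_natE k (p : {poly rat}) : (k%:R : rat) *: p = (k%:R : {poly rat}) * p.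
Proof. by rewrite scaler_nat mulr_natl. Qed.

Lemma L1 n : (1 - 'X) * hser n.+1 = 'X * (#|avoiders n|)%:R - 'X * 'X * Fp n.
Proof.
rewrite /hser big_add1 /=.
rewrite (eq_big_nat _ _ (F2 := fun l => \sum_(t in avoiders n) ((l <= Kf t)%N : nat)%:R * 'X^(l.+1))); last first.
  by move=> l /andP[_ ln]; rewrite scale_natE snl_R ?mulr_suml //; lia.
rewrite exchange_big /=.
rewrite (eq_bigr (fun t => \sum_(0 <= l < (Kf t).+1) 'X^(l + 1))); last first.
  move=> t _; have [Kn _] := Kf_spec t.
  rewrite (big_cat_nat (n := (Kf t).+1)) //=.
  rewrite [\sum_((Kf t).+1 <= i < n.+1) _]big1_seq ?addr0; last first.
    move=> l /andP[_]; rewrite mem_index_iota => /andP[Kl _].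
    by rewrite leqNgt Kl mul0r.
  apply: eq_big_nat => l /andP[_ lK]; rewrite -ltnS lK mul1r addn1 //.
rewrite mulr_sumr (eq_bigr (fun t => 'X - 'X * 'X * 'X^(Kf t))); last first.
  by move=> t _; rewrite tele // add0n !addn1 !exprS expr0; ring.
rewrite sumrB sumr_const /Fp mulr_sumr mulr_natr.
by [].
Qed.
End HL.

From mathcomp Require Import boolp.
Import GRing.Theory.
Local Open Scope ring_scope.

Definition fzero : fps := fun _ => 0.
Definition fopp (f : fps) : fps := fun n => - f n.

Lemma faddA : associative fadd.
Proof. by move=> f g h; apply: funext => n; rewrite /fadd addrA. Qed.
Lemma faddC : commutative fadd.
Proof. by move=> f g; apply: funext => n; rewrite /fadd addrC. Qed.
Lemma fadd0 : left_id fzero fadd.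
Proof. by move=> f; apply: funext => n; rewrite /fadd /fzero add0r. Qed.
Lemma faddN : left_inverse fzero fopp fadd.
Proof. by move=> f; apply: funext => n; rewrite /fadd /fopp /fzero addNr. Qed.

HB.instance Definition _ := gen_eqMixin fps.
HB.instance Definition _ := gen_choiceMixin fps.
HB.instance Definition _ := GRing.isZmodule.Build fps faddA faddC fadd0 faddN.

Lemma fmulC : commutative fmul.
Proof.
move=> f g; apply: funext => n; rewrite /fmul.
rewrite (reindex_inj rev_ord_inj) /=; apply: eq_bigr => i _.
rewrite subKn 1?mulrC //; by rewrite -ltnS.
Qed.

Lemma fmul1 : left_id fone fmul.
Proof.
move=> f; apply: funext => n; rewrite /fmul /fone /fconst.
rewrite big_ord_recl /= mul1r subn0 big1 ?addr0 // => i _; by rewrite mul0r.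
Qed.

Lemma fmulDl : left_distributive fmul fadd.
Proof.
move=> f g h; apply: funext => n; rewrite /fmul /fadd -big_split /=.
by apply: eq_bigr => i _; rewrite mulrDl.
Qed.

Lemma fmulE (f g : fps) n : fmul f g n = \sum_(0 <= i < n.+1) f i * g (n - i)%N.
Proof. by rewrite /fmul big_mkord. Qed.

Lemma fmulA : associative fmul.
Proof.
move=> f g h; apply: funext => n.
rewrite fmulE.
transitivity (\sum_(0 <= i < n.+1) \sum_(0 <= j < (n - i).+1) f i * (g j * h (n - i - j)%N)).
  by apply: eq_bigr => i _; rewrite fmulE big_distrr.
rewrite [RHS]fmulE.
transitivity (\sum_(0 <= k < n.+1) \sum_(0 <= i < k.+1) f i * (g (k - i)%N * h (n - k)%N)).
  transitivity (\sum_(0 <= i < n.+1) \sum_(i <= k < n.+1) f i * (g (k - i)%N * h (n - k)%N)).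
    apply: eq_big_nat => i /andP[_ lin].
    have := @big_addn _ 0 +%R 0 n.+1 i xpredT (fun k => f i * (g (k - i)%N * h (n - k)%N)).
    rewrite add0n => ->.
    rewrite subSn //; apply: eq_big_nat => j /andP[_ ljn].
    by rewrite addnK (addnC j i) subnDA.
  under eq_bigr do rewrite (big_nat_widenl _ 0) //.
  rewrite (exchange_big_dep_nat xpredT) //=.
  apply: eq_big_nat => k /andP[_ lkn].
  by rewrite (big_nat_widen _ _ _ _ _ lkn).
apply: eq_big_nat => k _; rewrite fmulE big_distrl /=.
by apply: eq_big_nat => i _; rewrite mulrA.
Qed.

Lemma fone_neq0 : fone != 0.
Proof.
apply/eqP => /(congr1 (fun f : fps => f 0%N)); rewrite /fone /fconst /=.
by move/eqP; rewrite oner_eq0.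
Qed.

HB.instance Definition _ := GRing.Zmodule_isComNzRing.Build fps fmulA fmulC fmul1 fmulDl fone_neq0.

Lemma fmulM (f g : fps) : fmul f g = f * g. Proof. by []. Qed.
Lemma faddD (f g : fps) : fadd f g = f + g. Proof. by []. Qed.
Lemma fsubB (f g : fps) : fsub f g = f - g. Proof. by []. Qed.
Lemma foneE : fone = 1. Proof. by []. Qed.

Lemma faddE (f g : fps) n : (f + g) n = f n + g n. Proof. by []. Qed.
Lemma foppE (f : fps) n : (- f) n = - f n. Proof. by []. Qed.
Lemma fsubE (f g : fps) n : (f - g) n = f n - g n. Proof. by []. Qed.
Lemma fzeroE n : (0 : fps) n = 0. Proof. by []. Qed.
Lemma foneE' n : (1 : fps) n = if n == 0%N then 1 else 0. Proof. by []. Qed.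
Lemma fmulE' (f g : fps) n : (f * g) n = \sum_(0 <= i < n.+1) f i * g (n - i)%N.
Proof. exact: fmulE. Qed.

Lemma fconstD a b : fconst (a + b) = fconst a + fconst b.
Proof. apply: funext => n; rewrite faddE /fconst; by case: (n == 0%N); rewrite ?addr0. Qed.
Lemma fconstN a : fconst (- a) = - fconst a.
Proof. apply: funext => n; rewrite foppE /fconst; by case: (n == 0%N); rewrite ?oppr0. Qed.
Lemma fconst1 : fconst 1 = 1. Proof. by []. Qed.
Lemma fconst0 : fconst 0 = 0.
Proof. by apply: funext => n; rewrite /fconst; case: (n == 0%N). Qed.
Lemma fconstn k : fconst k%:R = k%:R.
Proof.
elim: k => [|k IH]; first exact: fconst0.
by rewrite -addn1 !natrD fconstD IH fconst1.
Qed.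
Lemma ftwoE : ftwo = 2%:R. Proof. exact: fconstn. Qed.

Lemma fcoefC (c : {poly rat}) (f : fps) n : (fconst c * f) n = c * f n.
Proof.
rewrite fmulE' big_nat_recl // /fconst /= subn0 big1_seq ?addr0 // => i _.
by rewrite mul0r.
Qed.
Lemma fconstM a b : fconst (a * b) = fconst a * fconst b.
Proof. apply: funext => n; rewrite fcoefC /fconst; by case: (n == 0%N); rewrite ?mulr0. Qed.

Lemma coefX0 (f : fps) : (fX * f) 0%N = 0.
Proof. by rewrite fmulE' big_nat1 /fX /= mul0r. Qed.
Lemma coefXS (f : fps) n : (fX * f) n.+1 = f n.
Proof.
rewrite fmulE' big_nat_recl // /fX /= mul0r add0r big_nat_recl // /= mul1r subSS subn0.
by rewrite big1_seq ?addr0 // => i _; rewrite mul0r.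
Qed.
Lemma coefU (f : fps) n : (fU * f) n = 'X * f n.
Proof. exact: fcoefC. Qed.

Lemma conv_low (g f : fps) n : (forall j, (j < n)%N -> f j = 0) -> (g * f) n = g 0%N * f n.
Proof.
move=> H; rewrite fmulE' big_nat_recl // subn0 big1_seq ?addr0 // => i /andP[_].
rewrite mem_index_iota => /andP[_ lin]; rewrite H ?mulr0 //.
lia.
Qed.

Lemma fat1D f g : fat1 (f + g) = fat1 f + fat1 g.
Proof. by apply: funext => n; rewrite /fat1 faddE hornerD polyCD. Qed.
Lemma fat1N f : fat1 (- f) = - fat1 f.
Proof. by apply: funext => n; rewrite /fat1 foppE hornerN polyCN. Qed.
Lemma fat1B f g : fat1 (f - g) = fat1 f - fat1 g.
Proof. by rewrite fat1D fat1N. Qed.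
Lemma fat1M f g : fat1 (f * g) = fat1 f * fat1 g.
Proof.
apply: funext => n; rewrite /fat1 !fmulE' horner_sum raddf_sum /=.
by apply: eq_bigr => i _; rewrite hornerM polyCM.
Qed.
Lemma fat1C c : fat1 (fconst c) = fconst (c.[1])%:P.
Proof. by apply: funext => n; rewrite /fat1 /fconst; case: (n == 0%N); rewrite ?horner0. Qed.
Lemma fat11 : fat1 1 = 1.
Proof. by rewrite -fconst1 fat1C hornerC. Qed.
Lemma fat1X : fat1 fX = fX.
Proof. by apply: funext => n; rewrite /fat1 /fX; case: (n == 1%N); [rewrite -polyC1 hornerC | rewrite horner0]. Qed.
Lemma fat1U : fat1 fU = 1.
Proof. by rewrite /fU fat1C hornerX. Qed.
Lemma fat1n k : fat1 k%:R = k%:R.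
Proof. by rewrite -fconstn fat1C -polyC_natr hornerC polyC_natr fconstn. Qed.

Lemma two_neq0 : (2%:R : {poly rat}) != 0.
Proof. by rewrite -polyC_natr polyC_eq0. Qed.

Lemma cancel_1U (f g : fps) : (1 - fU) * f = (1 - fU) * g -> f = g.
Proof.
move=> H; apply: funext => n; have := congr1 (fun F : fps => F n) H.
rewrite /fU -fconst1 -fconstN -fconstD !fcoefC => /mulfI; apply.
apply/eqP => /(congr1 (fun p : {poly rat} => p.[0])).
by rewrite !hornerE /= => /eqP; rewrite oner_eq0.
Qed.
Lemma cancel_X (f g : fps) : fX * f = fX * g -> f = g.
Proof.
by move=> H; apply: funext => n; have := congr1 (fun F : fps => F n.+1) H; rewrite !coefXS.
Qed.
Lemma cancel_2 (f g : fps) : 2%:R * f = 2%:R * g -> f = g.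
Proof.
move=> H; apply: funext => n; have := congr1 (fun F : fps => F n) H.
rewrite -fconstn !fcoefC => /mulfI; apply; exact: two_neq0.
Qed.

Lemma sqrt_unique (A B : fps) : A 0%N = 1 -> B 0%N = 1 -> A * A = B * B -> A = B.
Proof.
move=> A0 B0 H.
have E : (A + B) * (A - B) = 0.
  have -> : (A + B) * (A - B) = A * A - B * B by ring.
  by rewrite H subrr.
suff : forall n, forall j, (j < n)%N -> A j = B j.
  by move=> S; apply: funext => n; apply: (S n.+1).
elim=> [//|n IH] j; rewrite ltnS leq_eqVlt => /orP[/eqP ->|]; last exact: IH.
have := congr1 (fun F : fps => F n) E; rewrite conv_low; last first.
  by move=> k /IH; rewrite fsubE => ->; rewrite subrr.
rewrite faddE A0 B0 fzeroE => /eqP; rewrite mulf_eq0 => /orP[|].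
  by rewrite (_ : (1 + 1 : {poly rat}) = 2%:R) // (negbTE two_neq0).
by rewrite fsubE subr_eq0 => /eqP.
Qed.

Definition tser : fps := (fone - fconst 6%:R * fX + fX * fX)%fps.

Lemma tserE : tser = 1 - 6%:R * fX + fX * fX.
Proof. by rewrite /tser fconstn. Qed.

Definition nextq (g : nat -> {poly rat}) (m : nat) : {poly rat} :=
  (2%:R^-1 : rat)%:P * (tser m - \sum_(1 <= i < m) g i * g (m - i)%N).

Fixpoint qs (n : nat) : nat -> {poly rat} :=
  if n is m.+1 then (fun i => if i == m.+1 then nextq (qs m) m.+1 else qs m i)
  else (fun i => if i == 0%N then 1 else 0).

Definition Qex : fps := fun n => qs n n.

Lemma qs_stable n i : (i <= n)%N -> qs n i = Qex i.
Proof.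
elim: n i => [|n IH] i.
  by rewrite leqn0 => /eqP ->.
rewrite leq_eqVlt => /orP[/eqP -> //|lt].
by rewrite /= (ltn_eqF lt) IH.
Qed.

Lemma QexS m : Qex m.+1 = nextq Qex m.+1.
Proof.
rewrite /Qex /= eqxx /nextq; congr (_ * (_ - _)).
apply: eq_big_nat => i /andP[i1 im].
by rewrite !qs_stable //; lia.
Qed.

Lemma half2 : (2%:R^-1 : rat)%:P * 2%:R = 1 :> {poly rat}.
Proof. by rewrite -polyC_natr -polyCM mulVf. Qed.

Lemma Qex_sq : Qex * Qex = tser.
Proof.
apply: funext => n; case: n => [|m].
  rewrite fmulE' big_nat1 /Qex /= mulr1 tserE !(faddE, foppE).
  by rewrite -fconstn !fcoefC coefX0 foneE' /= mulr0 subr0 addr0.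
rewrite fmulE' big_nat_recl // big_nat_recr //= subn0 subnn.
rewrite [Qex 0%N]/Qex /= mul1r mulr1 QexS /nextq.
rewrite big_add1 /=.
set M := \sum_(0 <= i < m) _.
set c := (2%:R^-1 : rat)%:P.
have h2 := half2; rewrite -/c in h2.
have -> : c * (tser m.+1 - M) + (M + c * (tser m.+1 - M)) = (c * 2%:R) * (tser m.+1 - M) + M.
  by ring.
by rewrite h2 mul1r subrK.
Qed.

Lemma Qex_spec : is_sqrt_schroder Qex.
Proof. by split; [by [] | move=> n; exact: (congr1 (fun F : fps => F n) Qex_sq)]. Qed.

Lemma fconstX : fconst 'X = fU. Proof. by []. Qed.
Lemma coef2 (f : fps) n : (2%:R * f) n = 2%:R * f n.
Proof. by rewrite -fconstn fcoefC. Qed.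

Lemma coef0_Xmul (c : {poly rat}) (g f : fps) : (fconst c + fX * g) * f = fconst c * f + fX * (g * f).
Proof. ring. Qed.

Lemma coef_lin (c : {poly rat}) (g f : fps) n :
  (forall j, (j < n)%N -> f j = 0) -> ((fconst c + fX * g) * f) n = c * f n.
Proof.
move=> H; rewrite conv_low // faddE /fconst /= coefX0 addr0 //.
Qed.

Lemma eq_trick (a b c d : fps) : a = b -> c - d = a - b -> c = d.
Proof. by move=> -> /eqP; rewrite subrr subr_eq0 => /eqP. Qed.

Lemma algebra_main (h Fp : fps) (cnt : nat -> nat)
  (HF1 : forall n, (Fp n).[1] = (cnt n)%:R)
  (L0 : Fp 0%N = 1) (Lh0 : h 0%N = 0)
  (L1 : forall n, (1 - 'X) * h n.+1 = 'X * (cnt n)%:R - 'X * 'X * Fp n)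
  (L2 : forall n, (1 - 'X) * Fp n.+1 = 'X * 'X * (cnt n)%:R + 'X * (1 - 2%:R * 'X) * Fp n)
  (Q : fps) (HQ0 : Q 0%N = 1) (HQ : Q * Q = tser) :
  2%:R * (1 - fU * (1 + fX) + 2%:R * fU * fU * fX) * h
    = 2%:R * fU * fX * (1 - fU) * (1 - fU * fX) + fU * fX * (1 - fU * (1 - fU) * fX) * (1 - fX - Q)
  /\ 2%:R * fat1 h = 1 - fX - Q
  /\ (forall n, (1 <= n)%N -> (cnt n)%:R = 2%:R^-1 * (1 - fX - Q) n).
Proof.
set T := 1 - fX - Q.
set r := fat1 Fp.
have uE : fU = fconst 'X by [].
have rE n : r n = (cnt n)%:R by rewrite /r /fat1 HF1 polyC_natr.
have U1 : 1 - fU = fconst (1 - 'X) by rewrite fconstD fconstN.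
have H1 : (1 - fU) * h = fX * (fU * r - fU * (fU * Fp)).
  apply: funext => [[|n]]; first by rewrite U1 fcoefC Lh0 mulr0 coefX0.
  rewrite U1 fcoefC coefXS L1 fsubE !coefU rE; by rewrite mulrA.
have H2 : (1 - fU) * Fp = (1 - fU) + fX * (fU * (fU * r) + fU * ((1 - 2%:R * fU) * Fp)).
  apply: funext => [[|n]].
    by rewrite U1 fcoefC faddE coefX0 L0 addr0 /fconst /= mulr1.
  rewrite U1 fcoefC faddE coefXS L2 /fconst /= add0r faddE !coefU rE.
  rewrite -fconst1 -fconstn uE -fconstM -fconstN -fconstD fcoefC.
  by rewrite !mulrA.
set K := 1 - fU - fX * fU + 2%:R * fX * fU * fU.
have KFp : K * Fp = (1 - fU) + fX * fU * fU * r.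
  have -> : K * Fp = (1 - fU) * Fp - fX * (fU * (1 - 2%:R * fU) * Fp) by rewrite /K; ring.
  rewrite H2; ring.
have TT : T * T = 2%:R * (1 - fX) * T - 4%:R * fX.
  apply/eqP; rewrite -subr_eq0.
  have -> : T * T - (2%:R * (1 - fX) * T - 4%:R * fX) = Q * Q - (1 - 6%:R * fX + fX * fX).
    by rewrite /T; ring.
  by rewrite HQ tserE subrr.
have fQ : fat1 Q = Q.
  apply: sqrt_unique.
  - by rewrite /fat1 HQ0 hornerC.
  - exact: HQ0.
  rewrite -fat1M HQ tserE !(fat1D, fat1N, fat1M) fat11 fat1X. by [].
have fT : fat1 T = T by rewrite /T !(fat1D, fat1N) fat11 fat1X fQ.
set S := 2%:R - T - 4%:R * fX * fU.
set N := 2%:R - T - 2%:R * fX * fU - fX * fU * T.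
set W := S * Fp - N.
set E := 2%:R * r - 2%:R - T.
have KW : 2%:R * K * W = fX * (fU * fU * S * E).
  have -> : 2%:R * K * W = 2%:R * S * (K * Fp) - 2%:R * K * N by rewrite /W; ring.
  rewrite KFp; apply/eqP; rewrite -subr_eq0.
  have -> : 2%:R * S * (1 - fU + fX * fU * fU * r) - 2%:R * K * N - fX * (fU * fU * S * E)
     = - (fX * fU * fU) * (T * T - (2%:R * (1 - fX) * T - 4%:R * fX)).
    by rewrite /S /K /N /E; ring.
  by rewrite TT subrr mulr0.
have fW : 2%:R * fat1 W = (2%:R - T - 4%:R * fX) * E.
  have -> : fat1 W = (2%:R - T - 4%:R * fX) * r - (2%:R - T - 2%:R * fX - fX * T).
    by rewrite /W /S /N !(fat1D, fat1N, fat1M, fat11, fat1X, fat1U) ?fQ -/r /T; ring.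
  apply/eqP; rewrite -subr_eq0.
  have -> : 2%:R * ((2%:R - T - 4%:R * fX) * r - (2%:R - T - 2%:R * fX - fX * T)) - (2%:R - T - 4%:R * fX) * E
     = - (T * T - (2%:R * (1 - fX) * T - 4%:R * fX)).
    by rewrite /E; ring.
  by rewrite TT subrr oppr0.
have WE : forall n j, (j < n)%N -> W j = 0 /\ E j = 0.
  elim=> [//|n IH] j; rewrite ltnS leq_eqVlt => /orP[/eqP ->|]; last exact: IH.
  have Wn : W n = 0.
    have := congr1 (fun F : fps => F n) KW.
    have -> : 2%:R * K = fconst (2%:R * (1 - 'X)) + fX * (fconst (2%:R * (2%:R * 'X * 'X - 'X))).
      by rewrite /K !(fconstM, fconstD, fconstN, fconst1) fconstX; ring.
    rewrite coef_lin; last by move=> k /IH [].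
    case: n IH => [|n] IH; first rewrite coefX0.
      by move/eqP; rewrite mulf_eq0 => /orP[|/eqP //]; rewrite mulf_eq0 (negbTE two_neq0) /= => /eqP/(congr1 (fun p : {poly rat} => p.[0])); rewrite !hornerE /= => /eqP; rewrite oner_eq0.
    rewrite coefXS conv_low; last by move=> k kn; have [] := IH k (leqW kn).
    have [_ ->] := IH n (ltnSn n); rewrite mulr0.
    by move/eqP; rewrite mulf_eq0 => /orP[|/eqP //]; rewrite mulf_eq0 (negbTE two_neq0) /= => /eqP/(congr1 (fun p : {poly rat} => p.[0])); rewrite !hornerE /= => /eqP; rewrite oner_eq0.
  split=> //.
  have := congr1 (fun F : fps => F n) fW.
  rewrite [RHS]conv_low; last by move=> k /IH [].
  have -> : (2%:R - T - 4%:R * fX) 0%N = 2%:R.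
    rewrite /T -!fconstn !(faddE, foppE) HQ0 !fcoefC /fX /fconst /= foneE' /=; ring.
  rewrite coef2 /fat1 Wn horner0 mulr0 => /esym/eqP.
  by rewrite mulf_eq0 (negbTE two_neq0) => /eqP.
have E0 : E = 0.
  by apply: funext => n; have [] := WE n.+1 n (ltnSn n).
have EE : 2%:R * r = 2%:R + T.
  apply/eqP; rewrite -subr_eq0.
  have -> : 2%:R * r - (2%:R + T) = E by rewrite /E; ring.
  by rewrite E0.
have Main : 2%:R * (1 - fU * (1 + fX) + 2%:R * fU * fU * fX) * h
    = 2%:R * fU * fX * (1 - fU) * (1 - fU * fX) + fU * fX * (1 - fU * (1 - fU) * fX) * T.
  apply: cancel_1U.
  have -> : (1 - fU) * (2%:R * (1 - fU * (1 + fX) + 2%:R * fU * fU * fX) * h)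
      = 2%:R * K * ((1 - fU) * h) by rewrite /K; ring.
  rewrite H1.
  have -> : 2%:R * K * (fX * (fU * r - fU * (fU * Fp)))
      = fX * fU * K * (2%:R * r) - 2%:R * fX * fU * fU * (K * Fp) by ring.
  rewrite KFp.
  have -> : fX * fU * K * (2%:R * r) - 2%:R * fX * fU * fU * (1 - fU + fX * fU * fU * r)
      = fX * fU * K * (2%:R * r) - 2%:R * fX * fU * fU * (1 - fU) - fX * fX * fU * fU * fU * fU * (2%:R * r).
    by ring.
  by rewrite EE /K /T; ring.
split=> //; split.
  apply: cancel_X; apply: (eq_trick (congr1 fat1 Main)).
  by rewrite !(fat1M, fat1D, fat1N, fat11, fat1X, fat1U) ?fQ /T; ring.
move=> n n1.
have := congr1 (fun F : fps => F n) EE.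
rewrite coef2 faddE -fconstn /fconst (negbTE (lt0n_neq0 n1)) add0r rE => <-.
rewrite mulrA mulVr ?mul1r //.
by rewrite poly_unitE -polyC_natr size_polyC coefC /= unitfE.
Qed.

Theorem corollary5p3 :
  (exists Q : fps, is_sqrt_schroder Q) /\
  (forall Q : fps, is_sqrt_schroder Q ->
    (* 2(1 - u(1+x) + 2u^2 x) h(x,u)
         = 2ux(1-u)(1-ux) + ux(1 - u(1-u)x)(1 - x - Q) *)
    (ftwo * (fone - fU * (fone + fX) + ftwo * fU * fU * fX) * hser
      == ftwo * fU * fX * (fone - fU) * (fone - fU * fX)
         + fU * fX * (fone - fU * (fone - fU) * fX) * (fone - fX - Q))%fps
    /\
    (* h(x,1) = (1 - x - Q)/2 *)
    (ftwo * fat1 hser == fone - fX - Q)%fps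
    /\
    (* the number of avoiders of size n is the n-th large Schroeder number,
       i.e. the coefficient of x^n in (1 - x - Q)/2 *)
    (forall n : nat, (1 <= n)%N ->
       ((#|avoiders n|)%:R : {poly rat}) = 2%:R^-1 * (fone - fX - Q)%fps n)).
Proof.
split; first by exists Qex; exact: Qex_spec.
move=> Q [HQ0 HQ].
have HQ' : Q * Q = tser by apply: funext => n; exact: HQ n.
have Lh0 : hser 0%N = 0 by rewrite /hser big_geq.
have [M1 [M2 M3]] := @algebra_main hser (fun n => Fp n) (fun n => #|avoiders n|)
   Fp1 Fp0 Lh0 L1 L2 Q HQ0 HQ'.
split; last split.
- by move=> n; rewrite ftwoE; exact: (congr1 (fun F : fps => F n) M1).
- by move=> n; rewrite ftwoE; exact: (congr1 (fun F : fps => F n) M2).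
- exact: M3.
Qed.
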